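(* Let $N\ge 2$ be even and let $B_N=K_{N/2,N/2}$ be the complete bipartite graph with two parts of size $N/2$ each, and $K_N$ the complete graph, both on vertex set $\{1,\dots,N\}$. Then \[ \rho(B_N,K_N)>\frac{1}{e-1}\cdot\frac1N \qquad\text{and}\qquad \rho(K_N,B_N)<\frac{e}{e-1}\cdot\frac1N. \]
   Context: Moran Birth-death process on two graphs (neutral case): $G^A$ and $G^B$ are connected undirected simple graphs on the same vertex set $\{1,\dots,N\}$. Every vertex is occupied by exactly one individual, of type $A$ (mutant) or type $B$ (resident). In each discrete time step, one individual is chosen uniformly at random among all $N$ individuals to reproduce; its offspring (of the same type) replaces the individual at a vertex chosen uniformly at random among the neighbors of the parent's vertex, where neighbors are taken in $G^A$ if the parent is of type $A$ and in $G^B$ if the parent is of type $B$. The all-$A$ and all-$B$ states are absorbing. The fixation probability $\rho(G^A,G^B)$ is the probability that the process reaches the all-$A$ state when started from exactly one type-$A$ individual at a uniformly random vertex, all other vertices of type $B$. Here $e$ is Euler's number. *)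

(* Defs.v *)
From mathcomp Require Import all_boot all_order all_algebra.
From mathcomp Require Import all_classical all_reals all_analysis.
Set Implicit Arguments. Unset Strict Implicit. Unset Printing Implicit Defensive.
Import Order.TTheory GRing.Theory Num.Theory.
Import numFieldNormedType.Exports.
Local Open Scope ring_scope.

(* Vertex set {1,...,N} is represented by 'I_N = {0,...,N-1}.
   A graph is an adjacency relation on 'I_N.
   A state of the process is the set S of vertices occupied by type A. *)

Definition complete_graph (N : nat) : rel 'I_N := fun i j => i != j.

Definition bipartite_graph (N : nat) : rel 'I_N :=
  fun i j => (i < N./2)%N != (j < N./2)%N.

(* One step of the Moran Birth-death process on (GA, GB), acting on functions
   of the state: (bd_step f) S = E[ f(next state) | current state S ].
   A parent i is chosen with probability 1/N; its offspring replaces a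
   uniformly chosen neighbour j of i in GA (if i is of type A, i.e. i \in S)
   or in GB (if i is of type B). *)
Definition bd_step (R : realType) (N : nat) (GA GB : rel 'I_N)
    (f : {set 'I_N} -> R) (S : {set 'I_N}) : R :=
  \sum_(i : 'I_N)
     let G := if i \in S then GA else GB in
     \sum_(j : 'I_N | G i j)
        (N%:R * #|[set k | G i k]|%:R)^-1 *
          f (if i \in S then j |: S else S :\ j).

(* Probability that the process started in state S is in the all-A state
   (absorbing) at time t, i.e. has fixated by time t. *)
Definition fix_by (R : realType) (N : nat) (GA GB : rel 'I_N) (t : nat)
    (S : {set 'I_N}) : R :=
  iter t (bd_step GA GB) (fun S' : {set 'I_N} => if S' == [set: 'I_N] then 1 else 0) S.

(* Fixation probability rho(GA, GB): start from a single A at a uniformly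
   random vertex; probability of ever reaching the all-A state
   (= limit of the nondecreasing sequence fix_by t). *)
Definition fixation_prob (R : realType) (N : nat) (GA GB : rel 'I_N) : R :=
  limn (fun t : nat => N%:R^-1 * \sum_(v : 'I_N) fix_by R GA GB t [set v]).

Arguments complete_graph N : clear implicits.
Arguments bipartite_graph N : clear implicits.
Arguments fixation_prob R {N} GA GB.

(* Main.v *)
Require Import Defs.
From mathcomp Require Import all_boot all_order all_algebra.
From mathcomp Require Import all_classical all_reals all_analysis.
From mathcomp Require Import ring lra zify.
Import numFieldNormedType.Exports.
Import Order.TTheory GRing.Theory Num.Theory.
Local Open Scope ring_scope.

Section Gen.
Variables (R : realType) (N : nat) (GA GB : rel 'I_N).
Hypothesis N0 : (0 < N)%N.
Hypothesis dA : forall i, (0 < #|[set k | GA i k]|)%N.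
Hypothesis dB : forall i, (0 < #|[set k | GB i k]|)%N.

Local Notation P := (@bd_step R N GA GB).
Local Notation sT := [set: 'I_N]%SET.
Local Notation s0 := (finset.set0 : {set 'I_N}).

Lemma inner_const (G : rel 'I_N) i (c : R) : (0 < #|[set k | G i k]|)%N ->
  \sum_(j | G i j) (N%:R * #|[set k | G i k]|%:R)^-1 * c = N%:R^-1 * c.
Proof.
move=> d.
rewrite -big_distrl /=.
rewrite (eq_bigl (fun j => j \in [set k | G i k])); last by move=> j; rewrite inE.
rewrite sumr_const; congr (_ * _).
have h1 : (#|[set k | G i k]|%:R : R) != 0 by rewrite pnatr_eq0 -lt0n.
have h2 : (N%:R : R) != 0 by rewrite pnatr_eq0 -lt0n.
by rewrite -[X in X = _]mulr_natr invfM -mulrA mulVf // mulr1.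
Qed.

Lemma P_const (c : R) S : P (fun _ => c) S = c.
Proof.
rewrite /bd_step /=.
under eq_bigr => i _.
  rewrite inner_const; last by case: (i \in S).
  over.
rewrite sumr_const card_ord -mulr_natr.
have h2 : (N%:R : R) != 0 by rewrite pnatr_eq0 -lt0n.
by field.
Qed.

Lemma P_le f g S : (forall T, f T <= g T) -> P f S <= P g S.
Proof.
move=> fg; rewrite /bd_step /=; apply: ler_sum => i _.
apply: ler_sum => j _; apply: ler_wpM2l; last exact: fg.
by rewrite invr_ge0 mulr_ge0.
Qed.

Lemma P_add f g S : P (fun T => f T + g T) S = P f S + P g S.
Proof.
rewrite /bd_step /= -big_split /=; apply: eq_bigr => i _.
by rewrite -big_split /=; apply: eq_bigr => j _; rewrite mulrDr.
Qed.

Lemma P_scale (a : R) f S : P (fun T => a * f T) S = a * P f S.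
Proof.
rewrite /bd_step /= mulr_sumr; apply: eq_bigr => i _.
by rewrite mulr_sumr; apply: eq_bigr => j _; rewrite mulrCA.
Qed.

Lemma P_sub f g S : P (fun T => f T - g T) S = P f S - P g S.
Proof.
rewrite -mulN1r -(P_scale (-1) g) -P_add; rewrite /bd_step /=.
by apply: eq_bigr => i _; apply: eq_bigr => j _; rewrite mulN1r.
Qed.

Lemma P_setT f : P f sT = f sT.
Proof.
rewrite -[RHS](P_const (f sT) sT) /bd_step /=.
apply: eq_bigr => i _; rewrite inE; apply: eq_bigr => j _.
by rewrite finset.setUT.
Qed.

Lemma P_set0 f : P f s0 = f s0.
Proof.
rewrite -[RHS](P_const (f s0) s0) /bd_step /=.
apply: eq_bigr => i _; rewrite inE; apply: eq_bigr => j _.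
by rewrite finset.set0D.
Qed.


Local Notation fb := (fix_by R GA GB).

Lemma fixS t S : fb t.+1 S = P (fb t) S.
Proof. by []. Qed.

Lemma s0T : (s0 == sT) = false.
Proof.
apply/negbTE/negP => /eqP h.
have : Ordinal N0 \in s0 by rewrite h inE.
by rewrite inE.
Qed.

Lemma P_ge0 f S : (forall T, 0 <= f T) -> 0 <= P f S.
Proof. move=> h; rewrite -[X in X <= _](P_const 0 S); exact: P_le. Qed.

Lemma fix_bnd t S : 0 <= fb t S <= 1.
Proof.
elim: t S => [|t IH] S.
  by rewrite /fix_by /=; case: ifP => _; rewrite ?ler01 ?lexx.
rewrite fixS; apply/andP; split.
  by apply: P_ge0 => T; case/andP: (IH T).
by rewrite -[X in _ <= X](P_const 1 S); apply: P_le => T; case/andP: (IH T).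
Qed.

Lemma fix_mono t S : fb t S <= fb t.+1 S.
Proof.
elim: t S => [|t IH] S.
  rewrite fixS; case: (boolP (S == sT)) => [/eqP ->|hS].
    by rewrite P_setT.
  rewrite /fix_by /= (negbTE hS).
  by apply: P_ge0 => T; case: ifP => _; rewrite ?ler01 ?lexx.
by rewrite fixS [X in _ <= X]fixS; apply: P_le.
Qed.

Lemma fix_T t : fb t sT = 1.
Proof.
elim: t => [|t IH]; first by rewrite /fix_by /= eqxx.
by rewrite fixS P_setT.
Qed.

Lemma fix_0 t : fb t s0 = 0.
Proof.
elim: t => [|t IH]; first by rewrite /fix_by /= s0T.
by rewrite fixS P_set0.
Qed.

Definition u S := limn (fun t => fb t S).

Lemma cvg_u S : ((fun t => fb t S) @ \oo --> u S)%classic.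
Proof.
have : cvgn (fun t => fb t S).
  apply: nondecreasing_is_cvgn.
    by apply/nondecreasing_seqP => t; exact: fix_mono.
  by exists 1 => _ [t _ <-]; case/andP: (fix_bnd t S).
by [].
Qed.

Lemma u_T : u sT = 1.
Proof.
rewrite /u (_ : (fun t => fb t sT) = fun _ => 1); last by apply/funext => t; rewrite fix_T.
exact: lim_cst.
Qed.

Lemma u_0 : u s0 = 0.
Proof.
rewrite /u (_ : (fun t => fb t s0) = fun _ => 0); last by apply/funext => t; rewrite fix_0.
exact: lim_cst.
Qed.

Lemma u_harm S : P u S = u S.
Proof.
have h1 : ((fun t => fb t.+1 S) @ \oo --> P u S)%classic.
  rewrite /bd_step /=.
  apply: cvg_big => //; first exact: add_continuous.
  move=> i _; apply: cvg_big => //; first exact: add_continuous.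
  move=> j _; apply: cvgMl_tmp; exact: cvg_u.
have h2 : ((fun t => fb t.+1 S) @ \oo --> u S)%classic.
  by rewrite (cvg_shiftS (fun t => fb t S)); exact: cvg_u.
exact: (cvg_unique _ h1 h2).
Qed.


Lemma P_termB (f : {set 'I_N} -> R) (S : {set 'I_N}) i j : (forall T, 0 <= f T) -> i \notin S -> GB i j ->
  (N%:R * #|[set k | GB i k]|%:R)^-1 * f (S :\ j) <= P f S.
Proof.
move=> f0 iS Gij; rewrite /bd_step /= (bigD1 i) //= (negbTE iS) (bigD1 j) //=.
rewrite -addrA lerDl addr_ge0 //.
  by apply: sumr_ge0 => k _; rewrite mulr_ge0 // invr_ge0 mulr_ge0.
apply: sumr_ge0 => k _; apply: sumr_ge0 => l _.
by rewrite mulr_ge0 // invr_ge0 mulr_ge0.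
Qed.

Lemma maxp (g : {set 'I_N} -> R) :
  (forall S, S != s0 -> S != sT -> g S <= P g S) -> g s0 <= 0 -> g sT <= 0 ->
  (forall S, S != s0 -> S != sT -> exists i j, [/\ i \notin S, j \in S & GB i j]) ->
  forall S, g S <= 0.
Proof.
move=> sub g0 gT dec.
pose S0 := Order.arg_max s0 xpredT g.
have hmax : forall T, g T <= g S0.
  rewrite /S0; case: (@Order.TotalTheory.arg_maxP _ _ _ s0 xpredT g isT) => T _ h T'.
  exact: h.
suff : g S0 <= 0 by move=> h S; exact: le_trans (hmax S) h.
rewrite leNgt; apply/negP => M0.
suff key : forall k (S : {set 'I_N}), #|S| = k -> g S < g S0 by have := key _ S0 erefl; rewrite ltxx.
elim=> [|k IH] S hS.
  by move/eqP: hS; rewrite cards_eq0 => /eqP ->; exact: le_lt_trans g0 M0.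
case: (boolP (S == sT)) => [/eqP ->|hT]; first exact: le_lt_trans gT M0.
have h0 : S != s0 by apply/eqP => h; move: hS; rewrite h cards0.
rewrite lt_neqAle hmax andbT; apply/negP => /eqP gSM.
have [i [j [iS jS Gij]]] := dec S h0 hT.
have := sub S h0 hT.
rewrite (_ : P g S = g S0 - P (fun T => g S0 - g T) S); last first.
  by rewrite P_sub P_const opprB addrC subrK.
move=> H.
have hp : 0 < P (fun T => g S0 - g T) S.
  apply: lt_le_trans (@P_termB (fun T => g S0 - g T) S i j _ iS Gij); last by move=> T; rewrite subr_ge0.
  rewrite mulr_gt0 // ?subr_gt0; last first.
    by apply: IH; move: hS; rewrite (cardsD1 j) jS add1n => -[].
  by rewrite invr_gt0 mulr_gt0 // ltr0n.
move: H; rewrite gSM; lra.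
Qed.

Lemma sum_indic (Pr Q : pred 'I_N) :
  \sum_(j | Pr j) ((Q j)%:R : R) = #|[set j | Pr j && Q j]|%:R.
Proof.
rewrite (eq_bigr (fun j => if Q j then 1 else 0)); last by move=> j _; case: (Q j).
rewrite -big_mkcondr (eq_bigl (fun j => j \in [set j | Pr j && Q j])) ?sumr_const //.
by move=> j; rewrite inE.
Qed.

Definition Up (S : {set 'I_N}) := \sum_(i in S)
  (N%:R * #|[set k | GA i k]|%:R)^-1 * (#|[set j | GA i j && (j \notin S)]|%:R : R).
Definition Dn (S : {set 'I_N}) := \sum_(i in ~: S)
  (N%:R * #|[set k | GB i k]|%:R)^-1 * (#|[set j | GB i j && (j \in S)]|%:R : R).

Lemma P_card (F : nat -> R) (S : {set 'I_N}) : P (fun T => F #|T|) S =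
  F #|S| + (F #|S|.+1 - F #|S|) * Up S + (F #|S|.-1 - F #|S|) * Dn S.
Proof.
suff : P (fun T => F #|T| - F #|S|) S =
   (F #|S|.+1 - F #|S|) * Up S + (F #|S|.-1 - F #|S|) * Dn S.
  by rewrite P_sub P_const => /eqP; rewrite subr_eq addrC addrA => /eqP.
rewrite /bd_step /=.
rewrite (eq_bigr (fun i => (if i \in S then (F #|S|.+1 - F #|S|) *
     ((N%:R * #|[set k | GA i k]|%:R)^-1 * (#|[set j | GA i j && (j \notin S)]|%:R : R)) else 0)
  + (if i \in S then 0 else (F #|S|.-1 - F #|S|) *
     ((N%:R * #|[set k | GB i k]|%:R)^-1 * (#|[set j | GB i j && (j \in S)]|%:R : R))))).
  rewrite big_split /= /Up /Dn !mulr_sumr -!big_mkcond /=; congr (_ + _).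
  rewrite [RHS]big_mkcond /=; apply: eq_bigr => i _; rewrite inE.
  by case: (i \in S).
move=> i _; case: (boolP (i \in S)) => iS; rewrite ?addr0 ?add0r.
  rewrite -sum_indic mulr_sumr mulr_sumr; apply: eq_bigr => j _.
  rewrite cardsU1; case: (j \in S) => /=; first by rewrite add0n subrr !mulr0.
  by rewrite add1n !mulr1 mulrC.
rewrite -sum_indic mulr_sumr mulr_sumr; apply: eq_bigr => j _.
case: (boolP (j \in S)) => jS /=.
  have e : #|S| = #|S :\ j|.+1 by rewrite (cardsD1 j S) jS.
  by rewrite e /= !mulr1 mulrC.
rewrite (_ : S :\ j = S) ?subrr ?mulr0 //.
by apply/setP => k; rewrite !inE; case: eqP => // ->; rewrite (negbTE jS).
Qed.

Lemma rho_eq : fixation_prob R GA GB = N%:R^-1 * \sum_(v : 'I_N) u [set v].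
Proof.
rewrite /fixation_prob.
have H : ((fun t => N%:R^-1 * \sum_(v : 'I_N) fb t [set v]) @ \oo -->
           N%:R^-1 * \sum_(v : 'I_N) u [set v])%classic.
  apply: cvgMl_tmp; apply: cvg_big => //; first exact: add_continuous.
  move=> v _; exact: cvg_u.
exact: (cvg_lim _ H).
Qed.

Lemma u_le (h : {set 'I_N} -> R) :
  (forall S, S != s0 -> S != sT -> P h S <= h S) -> (forall S, 0 <= h S) -> 1 <= h sT ->
  forall S, u S <= h S.
Proof.
move=> hsup h0 hT.
have fb_le : forall t S, fb t S <= h S.
  elim=> [|t IH] S.
    by rewrite /fix_by /=; case: ifP => [/eqP ->|_] //.
  rewrite fixS; case: (boolP (S == s0)) => [/eqP ->|S0]; first by rewrite P_set0.
  case: (boolP (S == sT)) => [/eqP ->|ST]; first by rewrite P_setT.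
  exact: le_trans (@P_le (fb t) h S IH) (hsup _ S0 ST).
move=> S; rewrite /u; apply: limr_le; first exact: cvgP (cvg_u S).
exact: nearW.
Qed.

End Gen.

Section Graphs.
Variable N : nat.
Hypothesis hN : (2 <= N)%N.
Hypothesis hev : ~~ odd N.

Local Notation n := (N./2).

Lemma NE : N = (n + n)%N.
Proof. by rewrite addnn -{1}(odd_double_half N) (negbTE hev). Qed.

Lemma n0 : (0 < n)%N.
Proof. have := NE; lia. Qed.

Definition Hs := [set j : 'I_N | (j < n)%N].

Lemma card_Hs : #|Hs| = n.
Proof.
have le : (n <= N)%N by have := NE; lia.
rewrite (_ : Hs = [set widen_ord le k | k in 'I_n]).
  by rewrite card_imset ?card_ord // => a b /(congr1 val) /= /val_inj.
apply/setP => j; rewrite inE; apply/idP/imsetP => [jn|[k _ ->]] //.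
  by exists (Ordinal jn) => //; apply: val_inj.
by case: k.
Qed.

Lemma card_HsC : #|~: Hs| = n.
Proof. have := cardsC Hs; rewrite card_Hs card_ord; have := NE; lia. Qed.

Lemma bip_set i : [set k | bipartite_graph N i k] = if i \in Hs then ~: Hs else Hs.
Proof.
apply/setP => k; rewrite /bipartite_graph !inE.
by case: (i < n)%N; rewrite !inE; case: (k < n)%N.
Qed.

Lemma deg_bip i : #|[set k | bipartite_graph N i k]| = n.
Proof. by rewrite bip_set; case: ifP => _; rewrite ?card_HsC ?card_Hs. Qed.

Lemma deg_comp i : #|[set k | complete_graph N i k]| = N.-1.
Proof.
rewrite (_ : [set k | complete_graph N i k] = [set~ i]) ?cardsC1 ?card_ord //.
by apply/setP => k; rewrite !inE /complete_graph eq_sym.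
Qed.

Definition Ecnt (A : {set 'I_N}) :=
  (#|A :&: Hs| * (n - #|A :\: Hs|) + #|A :\: Hs| * (n - #|A :&: Hs|))%N.

Lemma countE (A : {set 'I_N}) :
  (\sum_(i in A) #|[set j | bipartite_graph N i j && (j \notin A)]|)%N = Ecnt A.
Proof.
rewrite (big_setID Hs) /= /Ecnt.
have c1 : #|[set j | (j \notin Hs) && (j \notin A)]| = (n - #|A :\: Hs|)%N.
  have := cardsID A (~: Hs); rewrite card_HsC.
  rewrite (_ : ~: Hs :&: A = A :\: Hs); last by rewrite finset.setDE finset.setIC.
  rewrite (_ : ~: Hs :\: A = [set j | (j \notin Hs) && (j \notin A)]); last first.
    by apply/setP => j; rewrite !inE andbC.
  by move=> <-; rewrite addKn.
have c2 : #|[set j | (j \in Hs) && (j \notin A)]| = (n - #|A :&: Hs|)%N.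
  have := cardsID A Hs; rewrite card_Hs finset.setIC.
  rewrite (_ : Hs :\: A = [set j | (j \in Hs) && (j \notin A)]); last first.
    by apply/setP => j; rewrite !inE andbC.
  by move=> <-; rewrite addKn.
rewrite (eq_bigr (fun _ => (n - #|A :\: Hs|)%N)); last first.
  move=> i; rewrite !inE => /andP[_ iH]; rewrite -c1; apply: eq_card => j.
  by rewrite !inE /bipartite_graph iH; case: (j < n)%N.
rewrite [X in (_ + X)%N](eq_bigr (fun _ => (n - #|A :&: Hs|)%N)); last first.
  move=> i; rewrite !inE => /andP[iH _]; rewrite -c2; apply: eq_card => j.
  by rewrite !inE /bipartite_graph (negbTE iH); case: (j < n)%N.
by rewrite !sum_nat_const.
Qed.

Lemma EcntC (A : {set 'I_N}) : Ecnt (~: A) = Ecnt A.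
Proof.
have e1 : #|~: A :&: Hs| = (n - #|A :&: Hs|)%N.
  have := cardsID A Hs; rewrite card_Hs finset.setIC (_ : Hs :\: A = ~: A :&: Hs).
    by move=> <-; rewrite addKn.
  by rewrite finset.setDE finset.setIC.
have e2 : #|~: A :\: Hs| = (n - #|A :\: Hs|)%N.
  have := cardsID A (~: Hs); rewrite card_HsC (_ : ~: Hs :\: A = ~: A :\: Hs).
    by rewrite (_ : ~: Hs :&: A = A :\: Hs) => [<-|]; rewrite ?addKn // finset.setDE finset.setIC.
  by rewrite !finset.setDE finset.setIC.
have b1 : (#|A :&: Hs| <= n)%N by rewrite -card_Hs; apply: subset_leq_card; exact: subsetIr.
have b2 : (#|A :\: Hs| <= n)%N.
  rewrite -card_HsC; apply: subset_leq_card; rewrite finset.setDE; exact: subsetIr.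
rewrite /Ecnt e1 e2 !subKn //.
by rewrite addnC mulnC [X in (_ + X)%N]mulnC.
Qed.

Lemma Ecnt_bnd (A : {set 'I_N}) :
  (#|A :&: Hs| <= n)%N /\ (#|A :\: Hs| <= n)%N.
Proof.
split; first by rewrite -card_Hs; apply: subset_leq_card; exact: subsetIr.
rewrite -card_HsC; apply: subset_leq_card; rewrite finset.setDE; exact: subsetIr.
Qed.

Lemma Ecnt_ineq (A : {set 'I_N}) : (#|A| * (N - #|A|) <= 2 * Ecnt A)%N.
Proof.
have [b1 b2] := Ecnt_bnd A; have e := NE.
rewrite -(cardsID Hs A) /Ecnt.
move: b1 b2 e; move: #|A :&: Hs| #|A :\: Hs| (N./2) => x y m b1 b2 e.
rewrite e; have [xy|yx] := leqP x y.
  move: xy => /subnK <-; move: (y - x)%N => d; nia.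
move: (ltnW yx) => /subnK <-; move: (x - y)%N => d; nia.
Qed.

Lemma Ecnt_one (A : {set 'I_N}) : #|A| = 1%N -> Ecnt A = n.
Proof.
have [b1 b2] := Ecnt_bnd A.
rewrite -(cardsID Hs A) /Ecnt.
move: b1 b2; move: #|A :&: Hs| #|A :\: Hs| (N./2) => x y m b1 b2 e.
nia.
Qed.

End Graphs.

Lemma key1 (R : realType) (a E q : R) : 1 <= a -> q <= 2 * E ->
  ((a + a) * (a + a - 1))^-1 * q <= (a + a) / (a + a - 1) * (((a + a) * a)^-1 * E).
Proof.
move=> a1 qE.
rewrite -subr_ge0.
have -> : (a + a) / (a + a - 1) * (((a + a) * a)^-1 * E) - ((a + a) * (a + a - 1))^-1 * q
   = (2 * E - q) / ((a + a) * (a + a - 1)).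
  field; repeat (apply/andP; split); rewrite gt_eqF //; lra.
apply: divr_ge0; first lra.
apply: mulr_ge0; lra.
Qed.

Lemma key2 (R : realType) (a E q : R) : 1 <= a -> q <= 2 * E ->
  (a + a - 1) / (a + a) * (((a + a) * (a + a - 1))^-1 * q) <= ((a + a) * a)^-1 * E.
Proof.
move=> a1 qE.
rewrite -subr_ge0.
have -> : ((a + a) * a)^-1 * E - (a + a - 1) / (a + a) * (((a + a) * (a + a - 1))^-1 * q)
   = (2 * E - q) / ((a + a) * (a + a)).
  field; repeat (apply/andP; split); rewrite gt_eqF //; lra.
apply: divr_ge0; first lra.
apply: mulr_ge0; lra.
Qed.

Lemma Z1_bound (R : realType) (N : nat) : (2 <= N)%N ->
  \sum_(j < N) (if (j : nat) is j'.+1 then (N%:R / N.-1%:R) ^+ j' else 1 : R)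
    < (expR 1 - 1) * N%:R.
Proof.
case: N => [|k] //; rewrite ltnS => k1.
rewrite big_ord_recl /=.
set g : R := k.+1%:R / k%:R.
have k0 : (0 < k%:R :> R) by rewrite ltr0n; lia.
have gE : g = 1 + k%:R^-1.
  by rewrite /g -addn1 natrD mulrDl mulfV ?gt_eqF // mul1r.
have hS : \sum_(i < k) g ^+ i = k%:R * (g ^+ k - 1).
  by rewrite subrX1 gE addrAC subrr add0r mulrA mulfV ?gt_eqF // mul1r.
rewrite (eq_bigr (fun i : 'I_k => g ^+ i)); last by move=> i _; rewrite add0n.
rewrite hS.
have ge : g ^+ k <= expR 1.
  rewrite -[X in expR X](mulfV (lt0r_neq0 k0)) expRM_natl.
  rewrite lerXn2r // ?nnegrE ?expR_ge0 //; last first.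
    by rewrite gE; exact: expR_ge1Dx.
  by rewrite gE addr_ge0 // invr_ge0 ltW.
have e2 : 2 < expR 1 :> R by have := @expR_gt1Dx R 1 (oner_neq0 _); lra.
have : k%:R * (g ^+ k - 1) <= k%:R * (expR 1 - 1) by apply: ler_wpM2l; [exact: ltW | lra].
rewrite -addn1 natrD; nra.
Qed.

Lemma Z2_bound (R : realType) (N : nat) : (2 <= N)%N ->
  (\sum_(j < N) (N.-1%:R / N%:R : R) ^+ j)^-1 < expR 1 / (expR 1 - 1) * N%:R^-1.
Proof.
case: N => [|k] //; rewrite ltnS => k1 /=.
set b : R := k%:R / k.+1%:R.
have N0 : (0 < k.+1%:R :> R) by rewrite ltr0n.
have bE : b = 1 - k.+1%:R^-1.
  rewrite /b -[k.+1]addn1 natrD; field; rewrite gt_eqF //; rewrite ltr_wpDl // ler0n.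
have hS : \sum_(i < k.+1) b ^+ i = k.+1%:R * (1 - b ^+ k.+1).
  have H := subrX1 b k.+1.
  have bm1 : b - 1 = - k.+1%:R^-1 by rewrite bE; ring.
  rewrite bm1 in H.
  by rewrite -opprB H mulNr opprK mulrA mulfV ?mul1r // lt0r_neq0.
rewrite hS.
have b0 : 0 <= b by rewrite /b divr_ge0.
have bl : b < expR (- k.+1%:R^-1).
  rewrite bE; apply: expR_gt1Dx; rewrite oppr_eq0 invr_eq0 gt_eqF //.
have bp : b ^+ k.+1 < (expR 1)^-1.
  rewrite -expRN -[X in expR (- X)](mulfV (lt0r_neq0 N0)) -mulrN expRM_natl.
  by rewrite ltrXn2r.
have e2 : 2 < expR 1 :> R by have := @expR_gt1Dx R 1 (oner_neq0 _); lra.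
set p := b ^+ k.+1 in bp *.
set e := expR 1 in bp e2 *.
have p0 : 0 <= p by rewrite /p exprn_ge0.
have epos : 0 < e by lra.
have pe : p * e < 1.
  by rewrite -(mulVf (lt0r_neq0 epos)) ltr_pM2r.
rewrite -subr_gt0.
have -> : e / (e - 1) * k.+1%:R^-1 - (k.+1%:R * (1 - p))^-1
    = (1 - p * e) / ((e - 1) * k.+1%:R * (1 - p)).
  have p1 : p < 1 by nra.
  field; repeat (apply/andP; split); rewrite gt_eqF //; lra.
have p1 : p < 1 by nra.
apply: divr_gt0; first lra.
apply: mulr_gt0; last lra.
apply: mulr_gt0 => //; lra.
Qed.

Section Cases.
Variables (R : realType) (N : nat).
Hypotheses (hN : (2 <= N)%N) (hev : ~~ odd N).
Local Notation n := (N./2).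
Local Notation GK := (complete_graph N).
Local Notation GP := (bipartite_graph N).
Local Notation sT := [set: 'I_N]%SET.
Local Notation s0 := (finset.set0 : {set 'I_N}).

Let N0 : (0 < N)%N. Proof. lia. Qed.
Let dP i : (0 < #|[set k | GP i k]|)%N. Proof. by rewrite deg_bip // n0. Qed.
Let dK i : (0 < #|[set k | GK i k]|)%N. Proof. rewrite deg_comp; lia. Qed.

Lemma cnt_out (S : {set 'I_N}) i : i \in S -> #|[set j | GK i j && (j \notin S)]| = (N - #|S|)%N.
Proof.
move=> iS; rewrite (_ : [set j | GK i j && (j \notin S)] = ~: S).
  by rewrite -[X in (X - _)%N](card_ord N) -(cardsC S) addKn.
apply/setP => j; rewrite !inE /complete_graph.
by case: eqP => [<-|]; rewrite ?iS.
Qed.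

Lemma cnt_in (S : {set 'I_N}) i : i \notin S -> #|[set j | GK i j && (j \in S)]| = #|S|.
Proof.
move=> iS; apply: eq_card => j; rewrite !inE /complete_graph.
by case: eqP => [<-|]; rewrite ?(negbTE iS).
Qed.

Lemma Up_P (S : {set 'I_N}) : Up R N GP S = (N%:R * n%:R)^-1 * (Ecnt N S)%:R.
Proof.
rewrite /Up (eq_bigr (fun i => (N%:R * n%:R)^-1 *
   (#|[set j | GP i j && (j \notin S)]|%:R : R))); last by move=> i _; rewrite deg_bip.
by rewrite -mulr_sumr -natr_sum countE.
Qed.

Lemma Dn_P (S : {set 'I_N}) : Dn R N GP S = (N%:R * n%:R)^-1 * (Ecnt N S)%:R.
Proof.
rewrite /Dn (eq_bigr (fun i => (N%:R * n%:R)^-1 *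
   (#|[set j | GP i j && (j \notin ~: S)]|%:R : R))).
  by rewrite -mulr_sumr -natr_sum countE // EcntC.
move=> i _; rewrite deg_bip //; congr (_ * _%:R); apply: eq_card => j.
by rewrite !inE negbK.
Qed.

Lemma Up_K (S : {set 'I_N}) : Up R N GK S = (N%:R * N.-1%:R)^-1 * ((#|S| * (N - #|S|))%N%:R).
Proof.
rewrite /Up (eq_bigr (fun _ => (N%:R * N.-1%:R)^-1 * ((N - #|S|)%N%:R : R))).
  by rewrite sumr_const -mulr_natl natrM; ring.
by move=> i iS; rewrite deg_comp cnt_out.
Qed.

Lemma Dn_K (S : {set 'I_N}) : Dn R N GK S = (N%:R * N.-1%:R)^-1 * (((N - #|S|) * #|S|)%N%:R).
Proof.
rewrite /Dn (eq_bigr (fun _ => (N%:R * N.-1%:R)^-1 * (#|S|%:R : R))).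
  rewrite sumr_const -mulr_natl natrM.
  have -> : (N - #|S|)%N = #|~: S| by rewrite -[X in (X - _)%N](card_ord N) -(cardsC S) addKn.
  ring.
by move=> i; rewrite inE => iS; rewrite deg_comp cnt_in.
Qed.

Lemma a1 : 1 <= n%:R :> R. Proof. by rewrite ler1n n0. Qed.
Lemma Na : N%:R = n%:R + n%:R :> R. Proof. by rewrite -natrD -NE. Qed.
Lemma N1a : N.-1%:R = n%:R + n%:R - 1 :> R.
Proof. by rewrite -Na -[in RHS](prednK N0) -addn1 natrD addrK. Qed.

Lemma qE (S : {set 'I_N}) : (((N - #|S|) * #|S|)%N%:R : R) <= 2 * (Ecnt N S)%:R.
Proof.
rewrite (_ : 2 * (Ecnt N S)%:R = (2 * Ecnt N S)%N%:R :> R); last by rewrite natrM.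
by rewrite ler_nat mulnC Ecnt_ineq.
Qed.

Lemma qE' (S : {set 'I_N}) : ((#|S| * (N - #|S|))%N%:R : R) <= 2 * (Ecnt N S)%:R.
Proof. by rewrite mulnC qE. Qed.


Let NR0 : (N%:R : R) != 0. Proof. by rewrite pnatr_eq0 -lt0n. Qed.
Let N1R0 : (N.-1%:R : R) != 0. Proof. rewrite pnatr_eq0 -lt0n; lia. Qed.
Let nR0 : (n%:R : R) != 0. Proof. by rewrite pnatr_eq0 -lt0n n0. Qed.

Lemma trans_ex (S : {set 'I_N}) : S != s0 -> S != sT ->
  exists i j, [/\ i \notin S, j \in S & GK i j].
Proof.
move=> S0 ST; have [j jS] := set0Pn _ S0.
case: (pickP (fun i => i \notin S)) => [i iS|h].
  exists i, j; split => //; rewrite /complete_graph; apply/eqP => e.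
  by move: iS; rewrite e jS.
exfalso; move: ST; apply/negP; rewrite negbK; apply/eqP/setP => k.
by rewrite inE; have := h k => /= /negbFE.
Qed.

Definition gam : R := N%:R / N.-1%:R.
Definition d1 (j : nat) : R := if j is j'.+1 then gam ^+ j' else 1.
Definition Z1 : R := \sum_(j < N) d1 j.
Definition F1 (m : nat) : R := (\sum_(j < m) d1 j) / Z1.

Lemma gam_gt0 : 0 < gam.
Proof. by rewrite /gam divr_gt0 // ltr0n; lia. Qed.

Lemma d1_gt0 j : 0 < d1 j.
Proof. by case: j => [|j] //=; rewrite exprn_gt0 // gam_gt0. Qed.

Lemma Z1_gt0 : 0 < Z1.
Proof.
rewrite /Z1 (bigD1 (Ordinal N0)) //=.
have : 0 <= \sum_(i < N | i != Ordinal N0) d1 i.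
  by apply: sumr_ge0 => i _; exact: ltW (d1_gt0 i).
lra.
Qed.

Lemma F1step m : F1 m.+1 - F1 m = d1 m / Z1.
Proof. by rewrite /F1 big_ord_recr /= mulrDl addrAC subrr add0r. Qed.

Lemma F1_0 : F1 0 = 0.
Proof. by rewrite /F1 big_ord0 mul0r. Qed.

Lemma F1_N : F1 N = 1.
Proof. by rewrite /F1 -/Z1 mulfV // lt0r_neq0 // Z1_gt0. Qed.

Lemma F1_1 : F1 1 = Z1^-1.
Proof. by rewrite /F1 big_ord1 /= mul1r. Qed.

Lemma h1_sub (S : {set 'I_N}) : S != s0 -> S != sT ->
  F1 #|S| <= bd_step GP GK (fun T => F1 #|T|) S.
Proof.
move=> S0 ST.
rewrite (@P_card R N GP GK N0 dP dK) Up_P Dn_K.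
have m0 : (0 < #|S|)%N by rewrite card_gt0.
have hq := qE S; have h1 := @Ecnt_one N hN hev S.
move: m0 hq h1; case: #|S| => [|j] // _ hq h1 /=.
rewrite F1step (_ : F1 j - F1 j.+1 = - (d1 j / Z1)); last by rewrite -F1step opprB.
suff key : d1 j * ((N%:R * N.-1%:R)^-1 * ((N - j.+1) * j.+1)%N%:R)
         <= d1 j.+1 * ((N%:R * n%:R)^-1 * (Ecnt N S)%:R).
  rewrite -addrA lerDl.
  set U := (N%:R * n%:R)^-1 * _ in key *.
  set D := (N%:R * N.-1%:R)^-1 * _ in key *.
  have -> : d1 j.+1 / Z1 * U + - (d1 j / Z1) * D = Z1^-1 * (d1 j.+1 * U - d1 j * D) by ring.
  by apply: mulr_ge0; [rewrite invr_ge0 ltW // Z1_gt0 | rewrite subr_ge0].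
case: j hq h1 => [|j] hq h1 /=.
  rewrite expr0 !mul1r h1 // muln1 subn1 le_eqVlt; apply/orP; left; apply/eqP.
  by field; rewrite NR0 N1R0 nR0.
rewrite exprSr -mulrA; apply: ler_wpM2l; first exact: exprn_ge0 (ltW gam_gt0).
rewrite /gam Na N1a.
apply: key1; first exact: a1.
exact: hq.
Qed.

Lemma case1 : (expR 1 - 1)^-1 * N%:R^-1 < fixation_prob R GP GK.
Proof.
have ule : forall S : {set 'I_N}, F1 #|S| <= u R N GP GK S.
  move=> S; rewrite -subr_le0; move: S.
  apply: (@maxp R N GP GK N0 dP dK (fun T => F1 #|T| - u R N GP GK T)).
  - move=> S S0 ST; rewrite P_sub (@u_harm R N GP GK N0 dP dK); have := @h1_sub S S0 ST; lra.
  - by rewrite cards0 F1_0 (@u_0 R N GP GK N0 dP dK) subrr.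
  - by rewrite cardsT card_ord F1_N (@u_T R N GP GK N0 dP dK) subrr.
  - exact: trans_ex.
rewrite (@rho_eq R N GP GK N0 dP dK).
have : F1 1 <= N%:R^-1 * \sum_(v : 'I_N) u R N GP GK [set v].
  apply: le_trans (_ : N%:R^-1 * \sum_(v : 'I_N) F1 1 <= _).
    by rewrite sumr_const card_ord -[F1 1 *+ N]mulr_natr mulrCA mulVf ?mulr1.
  apply: ler_wpM2l; first by rewrite invr_ge0 ler0n.
  by apply: ler_sum => v _; rewrite -(cards1 v) ule.
apply: lt_le_trans.
have hz : Z1 < (expR 1 - 1) * N%:R by move: (@Z1_bound R N hN); rewrite /Z1 /d1 /gam.
have e2 : 2 < expR 1 :> R by have := @expR_gt1Dx R 1 (oner_neq0 _); lra.
rewrite F1_1 -invfM ltf_pV2 // posrE ?Z1_gt0 //.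
by apply: mulr_gt0; [lra | rewrite ltr0n].
Qed.


Definition bet : R := N.-1%:R / N%:R.
Definition Z2 : R := \sum_(j < N) bet ^+ j.
Definition F2 (m : nat) : R := (\sum_(j < m) bet ^+ j) / Z2.

Lemma bet_ge0 : 0 <= bet.
Proof. by rewrite /bet divr_ge0. Qed.

Lemma Z2_gt0 : 0 < Z2.
Proof.
rewrite /Z2 (bigD1 (Ordinal N0)) //= expr0.
have : 0 <= \sum_(i < N | i != Ordinal N0) bet ^+ i.
  by apply: sumr_ge0 => i _; exact: exprn_ge0 bet_ge0.
lra.
Qed.

Lemma F2step m : F2 m.+1 - F2 m = bet ^+ m / Z2.
Proof. by rewrite /F2 big_ord_recr /= mulrDl addrAC subrr add0r. Qed.

Lemma F2_N : F2 N = 1.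
Proof. by rewrite /F2 -/Z2 mulfV // lt0r_neq0 // Z2_gt0. Qed.

Lemma F2_1 : F2 1 = Z2^-1.
Proof. by rewrite /F2 big_ord1 /= expr0 mul1r. Qed.

Lemma F2_ge0 m : 0 <= F2 m.
Proof.
rewrite /F2 divr_ge0 ?(ltW Z2_gt0) //.
by apply: sumr_ge0 => i _; exact: exprn_ge0 bet_ge0.
Qed.

Lemma h2_sup (S : {set 'I_N}) : S != s0 -> S != sT ->
  bd_step GK GP (fun T => F2 #|T|) S <= F2 #|S|.
Proof.
move=> S0 ST.
rewrite (@P_card R N GK GP N0 dK dP) Up_K Dn_P.
have m0 : (0 < #|S|)%N by rewrite card_gt0.
have hq := qE' S.
move: m0 hq; case: #|S| => [|j] // _ hq /=.
rewrite F2step (_ : F2 j - F2 j.+1 = - (bet ^+ j / Z2)); last by rewrite -F2step opprB.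
suff key : bet ^+ j.+1 * ((N%:R * N.-1%:R)^-1 * (j.+1 * (N - j.+1))%N%:R)
         <= bet ^+ j * ((N%:R * n%:R)^-1 * (Ecnt N S)%:R).
  rewrite -addrA gerDl.
  set U := (N%:R * N.-1%:R)^-1 * _ in key *.
  set D := (N%:R * n%:R)^-1 * _ in key *.
  have -> : bet ^+ j.+1 / Z2 * U + - (bet ^+ j / Z2) * D
      = - (Z2^-1 * (bet ^+ j * D - bet ^+ j.+1 * U)) by ring.
  rewrite oppr_le0.
  by apply: mulr_ge0; [rewrite invr_ge0 ltW // Z2_gt0 | rewrite subr_ge0].
rewrite exprSr -mulrA; apply: ler_wpM2l; first exact: exprn_ge0 bet_ge0.
rewrite /bet Na N1a.
apply: key2; first exact: a1.
exact: hq.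
Qed.

Lemma case2 : fixation_prob R GK GP < expR 1 / (expR 1 - 1) * N%:R^-1.
Proof.
have uh : forall S : {set 'I_N}, u R N GK GP S <= F2 #|S|.
  apply: (@u_le R N GK GP N0 dK dP (fun T => F2 #|T|)).
  - by move=> S S0 ST; exact: h2_sup.
  - by move=> S; exact: F2_ge0.
  - by rewrite cardsT card_ord F2_N.
rewrite (@rho_eq R N GK GP N0 dK dP).
have : N%:R^-1 * \sum_(v : 'I_N) u R N GK GP [set v] <= F2 1.
  apply: (@le_trans _ _ (N%:R^-1 * \sum_(v : 'I_N) F2 1)).
    apply: ler_wpM2l; first by rewrite invr_ge0 ler0n.
    by apply: ler_sum => v _; rewrite -(cards1 v) uh.
  by rewrite sumr_const card_ord -[F2 1 *+ N]mulr_natr mulrCA mulVf ?mulr1.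
move/le_lt_trans; apply.
rewrite F2_1.
by move: (@Z2_bound R N hN); rewrite /Z2 /bet.
Qed.

End Cases.

Theorem theorem2 (R : realType) (N : nat) (hN : (2 <= N)%N) (hev : ~~ odd N) :
  (expR 1 - 1)^-1 * N%:R^-1 <
    fixation_prob R (bipartite_graph N) (complete_graph N)
  /\
  fixation_prob R (complete_graph N) (bipartite_graph N) <
    expR 1 / (expR 1 - 1) * N%:R^-1.
Proof.
split; [exact: (@case1 R N hN hev) | exact: (@case2 R N hN hev)].
Qed.
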